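(* Let $A$ be a Jacobson ring and $a\in A$. Let $B$ be an $A$-algebra such that the localization $B_a=B[1/a]$ is integral over $A_a=A[1/a]$. Then $a\cdot\mathrm{Jac}_B J\subseteq \mathrm{Nil}_B J$ for every ideal $J$ of $B$.
   Context: All rings are commutative with identity. The setting is constructive mathematics: no law of excluded middle and no Zorn's lemma. For a ring $A$ and a subset $U\subseteq A$, $\langle U\rangle_A$ denotes the ideal generated by $U$. Define $\mathrm{Nil}_A U:=\{a\in A:\exists n\ge 0,\ a^n\in\langle U\rangle_A\}$ and $\mathrm{Jac}_A U:=\{a\in A:\forall b\in A,\ 1\in\langle U\cup\{1-ab\}\rangle_A\}$. A ring $A$ is called Jacobson if every ideal $I$ of $A$ satisfies $\mathrm{Jac}_A I\subseteq \mathrm{Nil}_A I$. *)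

(* Defs.v *)
From mathcomp Require Import all_boot all_algebra.
Set Implicit Arguments. Unset Strict Implicit. Unset Printing Implicit Defensive.
Import GRing.Theory.
Local Open Scope ring_scope.

Section Ideals.
Variable R : comPzRingType.

Definition is_ideal (I : R -> Prop) : Prop :=
  [/\ I 0, (forall x y, I x -> I y -> I (x + y)) & (forall r x, I x -> I (r * x))].

Definition gen_ideal (U : R -> Prop) : R -> Prop :=
  fun x => exists (n : nat) (r u : 'I_n -> R),
      (forall i, U (u i)) /\ x = \sum_(i < n) r i * u i.

Definition Nilrad (U : R -> Prop) : R -> Prop :=
  fun x => exists n : nat, gen_ideal U (x ^+ n).

Definition Jacrad (U : R -> Prop) : R -> Prop :=
  fun x => forall b : R, gen_ideal (fun y => U y \/ y = 1 - x * b) 1.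

Definition Jacobson_ring : Prop :=
  forall I : R -> Prop, is_ideal I -> forall x, Jacrad I x -> Nilrad I x.

End Ideals.

(* The localization B[1/s] written out explicitly: an element b/s^n is
   represented by the pair (b, n); equality in B[1/s] is [loc_eq s]. *)
Section Localization.
Variable B : comPzRingType.
Variable s : B.

Definition loc_eq (x y : B * nat) : Prop :=
  exists k : nat, s ^+ k * (s ^+ y.2 * x.1 - s ^+ x.2 * y.1) = 0.
Definition loc_zero : B * nat := (0, 0%N).
Definition loc_one : B * nat := (1, 0%N).
Definition loc_add (x y : B * nat) : B * nat :=
  (s ^+ y.2 * x.1 + s ^+ x.2 * y.1, (x.2 + y.2)%N).
Definition loc_mul (x y : B * nat) : B * nat := (x.1 * y.1, (x.2 + y.2)%N).
Definition loc_exp (x : B * nat) (n : nat) : B * nat := iter n (loc_mul x) loc_one.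

End Localization.

(* Given an A-algebra B (structure map f) and a : A, B[1/a] is integral over
   A[1/a]: every element x of B[1/a] is a root of a monic polynomial
   X^n + c_{n-1} X^{n-1} + ... + c_0 whose coefficients c_i lie in A[1/a]
   (mapped into B[1/a] by (c, m) |-> (f c, m)). *)
Definition loc_integral (A B : comPzRingType) (f : {rmorphism A -> B}) (a : A)
  : Prop :=
  forall x : B * nat, exists (n : nat) (c : 'I_n -> A * nat),
    loc_eq (f a)
      (loc_add (f a) (loc_exp x n)
         (\big[(loc_add (f a))/(loc_zero B)]_(i < n)
             loc_mul (f (c i).1, (c i).2) (loc_exp x i)))
      (loc_zero B).

(* Main.v *)
Require Import Defs.
From mathcomp Require Import all_boot all_algebra.
From mathcomp Require Import ring.
Import GRing.Theory.
Set Implicit Arguments. Unset Strict Implicit.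
Local Open Scope ring_scope.

Lemma ideal0 (R : comPzRingType) (J : R -> Prop) : is_ideal J -> J 0.
Proof. by case. Qed.
Lemma idealD (R : comPzRingType) (J : R -> Prop) x y :
  is_ideal J -> J x -> J y -> J (x + y).
Proof. by case=> _ H _; apply: H. Qed.
Lemma idealMl (R : comPzRingType) (J : R -> Prop) r x :
  is_ideal J -> J x -> J (r * x).
Proof. by case=> _ _ H; apply: H. Qed.
Lemma idealMr (R : comPzRingType) (J : R -> Prop) r x :
  is_ideal J -> J x -> J (x * r).
Proof. by rewrite mulrC; apply: idealMl. Qed.
Lemma idealN (R : comPzRingType) (J : R -> Prop) x :
  is_ideal J -> J x -> J (- x).
Proof. by move=> HJ Hx; rewrite -mulN1r; apply: idealMl. Qed.
Lemma idealB (R : comPzRingType) (J : R -> Prop) x y :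
  is_ideal J -> J x -> J y -> J (x - y).
Proof. by move=> HJ Hx Hy; apply: idealD => //; apply: idealN. Qed.
Lemma ideal_eq (R : comPzRingType) (J : R -> Prop) x y :
  x = y -> J x -> J y.
Proof. by move=> ->. Qed.
Lemma ideal_sum (R : comPzRingType) (J : R -> Prop) n (F : 'I_n -> R) :
  is_ideal J -> (forall i, J (F i)) -> J (\sum_(i < n) F i).
Proof.
move=> HJ HF; apply: (big_ind J); first exact: ideal0.
  by move=> x y; apply: idealD.
by move=> i _; apply: HF.
Qed.

Lemma gen_sub (R : comPzRingType) (I : R -> Prop) x :
  is_ideal I -> gen_ideal I x -> I x.
Proof.
move=> HI [n [r [u [Hu ->]]]]; apply: ideal_sum => // i.
by apply: idealMl.
Qed.

Lemma gen_of (R : comPzRingType) (I : R -> Prop) x : I x -> gen_ideal I x.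
Proof.
move=> Hx; exists 1%N, (fun _ => 1), (fun _ => x); split=> //.
by rewrite big_ord1 mul1r.
Qed.

Lemma gen2 (R : comPzRingType) (I : R -> Prop) (c j w : R) :
  I j -> gen_ideal (fun y => I y \/ y = c) (j + w * c).
Proof.
move=> Hj.
exists 2%N, (fun i : 'I_2 => if val i == 0%N then 1 else w),
  (fun i : 'I_2 => if val i == 0%N then j else c).
split.
  by case=> [[|[|k]] Hk] /=; [left | right | ].
by rewrite big_ord_recl big_ord1 /= mul1r.
Qed.

Lemma gen_dec (R : comPzRingType) (J : R -> Prop) c z :
  is_ideal J -> gen_ideal (fun y => J y \/ y = c) z ->
  exists j w, J j /\ z = j + w * c.
Proof.
move=> HJ [n [r [u [Hu ->]]]].
apply: (big_ind (fun z => exists j w, J j /\ z = j + w * c)).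
- by exists 0, 0; split; [apply: ideal0 | rewrite mul0r addr0].
- move=> x y [j1 [w1 [H1 ->]]] [j2 [w2 [H2 ->]]].
  exists (j1 + j2), (w1 + w2); split; first exact: idealD.
  ring.
- move=> i _; case: (Hu i) => [Hi | ->].
    exists (r i * u i), 0; split; first exact: idealMl.
    by rewrite mul0r addr0.
  by exists 0, (r i); split; [apply: ideal0 | rewrite add0r].
Qed.

Lemma jac_dec (R : comPzRingType) (J : R -> Prop) x b :
  is_ideal J -> Jacrad J x -> exists j w, J j /\ 1 = j + w * (1 - x * b).
Proof. by move=> HJ Hx; apply: gen_dec => //; apply: Hx. Qed.

Lemma jac_of (R : comPzRingType) (J : R -> Prop) x :
  (forall b, exists j w, J j /\ 1 = j + w * (1 - x * b)) -> Jacrad J x.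
Proof. by move=> H b; case: (H b) => [j [w [Hj E]]]; rewrite [X in gen_ideal _ X]E; apply: gen2. Qed.

Lemma powJ (R : comPzRingType) (J : R -> Prop) j w N :
  is_ideal J -> J j -> J ((j + w) ^+ N - w ^+ N).
Proof.
move=> HJ Hj; elim: N => [|N IH].
  by rewrite !expr0 subrr; apply: ideal0.
have -> : (j + w) ^+ N.+1 - w ^+ N.+1 =
   (j + w) * ((j + w) ^+ N - w ^+ N) + w ^+ N * j by rewrite !exprS; ring.
by apply: (idealD HJ); apply: (idealMl _ HJ).
Qed.
Lemma loc_exp0 (B : comPzRingType) (r : B) i :
  loc_exp (r, 0%N) i = (r ^+ i, 0%N).
Proof.
elim: i => [|i IH] //=.
by rewrite IH /loc_mul /= exprS.
Qed.

Lemma loc_big (B : comPzRingType) (s : B) n (F : 'I_n -> B * nat) :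
  exists E (d : nat -> nat),
   \big[(loc_add s)/(loc_zero B)]_(i < n) F i = (\sum_(i < n) s ^+ (d i) * (F i).1, E).
Proof.
elim: n F => [|n IH] F.
  by exists 0%N, (fun _ => 0%N); rewrite !big_ord0.
rewrite big_ord_recl /=.
case: (IH (fun i => F (lift ord0 i))) => E [d ->].
exists ((F ord0).2 + E)%N, (fun k => if k is k'.+1 then ((F ord0).2 + d k')%N else E).
rewrite big_ord_recl /= /loc_add /=; congr (_, _).
rewrite mulr_sumr; congr (_ + _).
apply: eq_bigr => i _; rewrite exprD; ring.
Qed.

Lemma int_rel (A B : comPzRingType) (f : {rmorphism A -> B}) (a : A) :
  loc_integral f a -> forall r : B, exists n e (G : 'I_n -> A),
    f a ^+ e * r ^+ n + \sum_(i < n) f (G i) * r ^+ i = 0.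
Proof.
move=> H r; case: (H (r, 0%N)) => n [c].
case: (loc_big (f a) (fun i => loc_mul (f (c i).1, (c i).2) (loc_exp (r, 0%N) i))) => E [d ->].
rewrite loc_exp0 /loc_eq /loc_add /= => [[k Hk]].
exists n, (k + E)%N, (fun i : 'I_n => a ^+ (k + d i) * (c i).1).
move: Hk; rewrite expr0 !mul1r mulr0 subr0 => Hk.
rewrite -[RHS]Hk mulrDr exprD -mulrA; congr (_ + _).
rewrite mulr_sumr; apply: eq_bigr => i _.
rewrite loc_exp0 /=.
rewrite rmorphM rmorphXn exprD; ring.
Qed.

Lemma claim1 (A B : comPzRingType) (f : {rmorphism A -> B}) (a : A) :
  Jacobson_ring A -> loc_integral f a ->
  forall J : B -> Prop, is_ideal J -> forall g : A, Jacrad J (f g) ->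
  exists K N, J (f a ^+ K * f g ^+ N).
Proof.
move=> HA Hint J HJ g Hg.
pose I := fun d : A => exists K, J (f a ^+ K * f d).
have HI : is_ideal I.
  split.
  - exists 0%N; rewrite rmorph0 mulr0; exact: ideal0.
  - move=> x y [K1 H1] [K2 H2]; exists (K1 + K2)%N.
    have -> : f a ^+ (K1 + K2) * f (x + y) =
       f a ^+ K2 * (f a ^+ K1 * f x) + f a ^+ K1 * (f a ^+ K2 * f y).
      by rewrite rmorphD exprD; ring.
    by apply: (idealD HJ); apply: (idealMl _ HJ).
  - move=> r x [K H]; exists K.
    have -> : f a ^+ K * f (r * x) = f r * (f a ^+ K * f x) by rewrite rmorphM; ring.
    exact: (idealMl _ HJ).
have Hjac : Jacrad I (a * g).
  apply: jac_of => b.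
  set u := 1 - a * g * b.
  case: (jac_dec (f (a * b)) HJ Hg) => j [r [Hj Er]].
  have Efu : 1 - f g * f (a * b) = f u by rewrite /u rmorphB rmorph1 !rmorphM; ring.
  rewrite Efu in Er.
  case: (int_rel Hint r) => n [e [G HG]].
  pose W := \sum_(i < n) G i * u ^+ (n - i.+1).
  pose z := a ^+ e + u * W.
  have Hz : I z.
    exists 0%N; rewrite expr0 mul1r.
    set v := r * f u.
    have Hv : v = - j + 1 by rewrite [in RHS]Er /v; ring.
    have Fz : f z = f a ^+ e + \sum_(i < n) f (G i) * f u ^+ (n - i).
      rewrite /z /W rmorphD rmorphXn rmorphM rmorph_sum mulr_sumr; congr (_ + _).
      apply: eq_bigr => i _; rewrite rmorphM rmorphXn -(subnSK (ltn_ord i)) exprS; ring.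
    have E2 : f a ^+ e * v ^+ n + \sum_(i < n) f (G i) * f u ^+ (n - i) * v ^+ i = 0.
      transitivity (f u ^+ n * (f a ^+ e * r ^+ n + \sum_(i < n) f (G i) * r ^+ i));
        last by rewrite HG mulr0.
      rewrite mulrDr mulr_sumr; congr (_ + _).
        by rewrite /v exprMn; ring.
      apply: eq_bigr => i _.
      have -> : f u ^+ n = f u ^+ (n - i) * f u ^+ i by rewrite -exprD subnK // ltnW.
      rewrite /v exprMn; ring.
    have J1 : J (f a ^+ e - f a ^+ e * v ^+ n).
      have H1 := powJ 1 n HJ (idealN HJ Hj).
      rewrite expr1n -Hv in H1.
      have -> : f a ^+ e - f a ^+ e * v ^+ n = (- f a ^+ e) * (v ^+ n - 1) by ring.
      exact: (idealMl _ HJ).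
    have J2 : J (\sum_(i < n) f (G i) * f u ^+ (n - i)
               - \sum_(i < n) f (G i) * f u ^+ (n - i) * v ^+ i).
      rewrite -sumrB; apply: ideal_sum => // i.
      have H1 := powJ 1 i HJ (idealN HJ Hj).
      rewrite expr1n -Hv in H1.
      have -> : f (G i) * f u ^+ (n - i) - f (G i) * f u ^+ (n - i) * v ^+ i
         = (- (f (G i) * f u ^+ (n - i))) * (v ^+ i - 1) by ring.
      exact: (idealMl _ HJ).
    rewrite Fz.
    move: E2 J1 J2.
    set S1 := \sum_(i < n) _ * _ ^+ (n - _).
    set S2 := \sum_(i < n) _ * _ * _.
    move=> E2 J1 J2.
    have -> : f a ^+ e + S1 = (f a ^+ e - f a ^+ e * v ^+ n) + (S1 - S2)
                + (f a ^+ e * v ^+ n + S2) by ring.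
    by rewrite E2 addr0; apply: (idealD HJ).
  pose t := a * g * b.
  pose S := \sum_(i < e) 1 ^+ (e.-1 - i) * t ^+ i.
  have Hs : 1 - t ^+ e = u * S by rewrite -(expr1n _ e) subrXX.
  exists ((g * b) ^+ e * z), (S - W * (g * b) ^+ e); split.
    case: Hz => K HK; exists K.
    rewrite rmorphM mulrCA; exact: (idealMl _ HJ).
  have -> : (1 : A) = t ^+ e + (1 - t ^+ e) by ring.
  rewrite Hs /z /t !exprMn; ring.
case: (HA I HI (a * g) Hjac) => N HN.
case: (gen_sub HI HN) => K HK.
exists (K + N)%N, N.
move: HK; rewrite rmorphXn rmorphM exprMn exprD; congr J; ring.
Qed.

Lemma claim2 (A B : comPzRingType) (f : {rmorphism A -> B}) (a : A) :
  Jacobson_ring A -> loc_integral f a ->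
  forall n (J : B -> Prop), is_ideal J -> forall y, Jacrad J y ->
  forall e (G : 'I_n -> A),
  J (f a ^+ e * y ^+ n + \sum_(i < n) f (G i) * y ^+ i) ->
  exists K N, J (f a ^+ K * y ^+ N).
Proof.
move=> HA Hint; elim=> [|n IH] J HJ y Hy e G HP.
  by exists e, 0%N; move: HP; rewrite big_ord0 addr0 !expr0.
pose Q := f a ^+ e * y ^+ n + \sum_(i < n) f (G (lift ord0 i)) * y ^+ i.
set P := f a ^+ e * y ^+ n.+1 + _ in HP.
have EP : P = y * Q + f (G ord0).
  rewrite /P /Q big_ord_recl expr0 mulr1 mulrDr mulr_sumr.
  have -> : \sum_(i < n) f (G (lift ord0 i)) * y ^+ (lift ord0 i)
          = \sum_(i < n) y * (f (G (lift ord0 i)) * y ^+ i).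
    by apply: eq_bigr => i _; rewrite lift0 exprS; ring.
  rewrite exprS; ring.
have Hc : Jacrad J (f (G ord0)).
  apply: jac_of => b.
  case: (jac_dec (- (Q * b)) HJ Hy) => j [w [Hj Ew]].
  exists (j + w * P * b), w; split.
    by apply: (idealD HJ) => //; apply: (idealMr _ HJ); apply: (idealMl _ HJ).
  rewrite [LHS]Ew EP; ring.
case: (claim1 HA Hint HJ Hc) => K [N HKN].
pose J' := fun z => exists j t, J j /\ z = j + t * Q.
have HJ' : is_ideal J'.
  split.
  - by exists 0, 0; split; [apply: ideal0 | rewrite mul0r addr0].
  - move=> x1 x2 [j1 [t1 [H1 ->]]] [j2 [t2 [H2 ->]]].
    exists (j1 + j2), (t1 + t2); split; first exact: (idealD HJ).
    ring.
  - move=> r x1 [j1 [t1 [H1 ->]]].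
    exists (r * j1), (r * t1); split; first exact: (idealMl _ HJ).
    ring.
have Hy' : Jacrad J' y.
  apply: jac_of => b.
  case: (jac_dec b HJ Hy) => j [w [Hj Ew]].
  exists j, w; split => //.
  by exists j, 0; split => //; rewrite mul0r addr0.
have HQ : J' (f a ^+ e * y ^+ n + \sum_(i < n) f (G (lift ord0 i)) * y ^+ i).
  by exists 0, 1; split; [apply: ideal0 | rewrite /Q add0r mul1r].
case: (IH J' HJ' y Hy' e (fun i => G (lift ord0 i)) HQ) => K2 [N2 [j [t [Hj Et]]]].
exists (K + K2 * N)%N, (N + N2 * N)%N.
have Hw : J (f a ^+ K * (y * Q) ^+ N).
  have H1 := powJ (y * Q) N HJ (idealN HJ HP).
  have -> : f a ^+ K * (y * Q) ^+ N
     = (-1) ^+ N * (f a ^+ K * f (G ord0) ^+ N)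
       - f a ^+ K * ((- P + y * Q) ^+ N - (y * Q) ^+ N).
    have -> : - P + y * Q = - f (G ord0) by rewrite EP; ring.
    rewrite [(- f _) ^+ N]exprNn; ring.
  apply: (idealB HJ); first exact: (idealMl _ HJ).
  exact: (idealMl _ HJ).
have -> : f a ^+ (K + K2 * N) * y ^+ (N + N2 * N)
        = y ^+ N * f a ^+ K * (f a ^+ K2 * y ^+ N2) ^+ N.
  by rewrite exprMn !exprD !exprM; ring.
rewrite Et.
have H2 := powJ (t * Q) N HJ Hj.
have -> : y ^+ N * f a ^+ K * (j + t * Q) ^+ N
   = y ^+ N * f a ^+ K * ((j + t * Q) ^+ N - (t * Q) ^+ N)
     + t ^+ N * (f a ^+ K * (y * Q) ^+ N) by rewrite !exprMn; ring.
by apply: (idealD HJ); apply: (idealMl _ HJ).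
Qed.

Unset Implicit Arguments. Set Strict Implicit.

Theorem mainTheorem6 (A B : comPzRingType) (f : {rmorphism A -> B}) (a : A) :
  Jacobson_ring A ->
  loc_integral f a ->
  forall J : B -> Prop, is_ideal J ->
  forall x : B, Jacrad J x -> Nilrad J (f a * x).
Proof.
move=> HA Hint J HJ x Hx.
case: (int_rel Hint x) => n [e [G HG]].
have HP : J (f a ^+ e * x ^+ n + \sum_(i < n) f (G i) * x ^+ i).
  by rewrite HG; apply: ideal0.
case: (claim2 HA Hint HJ Hx HP) => K [N HKN].
exists (K + N)%N; apply: gen_of.
have -> : (f a * x) ^+ (K + N) = f a ^+ N * x ^+ K * (f a ^+ K * x ^+ N)
  by rewrite exprMn !exprD; ring.
exact: (idealMl _ HJ).
Qed.
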